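(* Let $\beta\in[0,1]$, $n\in\mathbb{N}$, and let $u:\{k\in\mathbb{N}_0^3: k_1+k_2+k_3\le n\}\to[0,\infty]$ be a function such that for every $m\in\{0,\dots,n\}$ the restriction of $u$ to $\{k\in\mathbb{N}_0^3: k_1+k_2+k_3=m\}$ is an upper $\beta$-confidence bound for the parameter $p\mapsto \min\{\frac{1-p_2}{1-p_1},1\}$ in the trinomial model $(\mathrm{M}_{m,p}: p\in\mathrm{prob}(\{1,2,3\}))$. Then the function $k\mapsto u(k_{10},k_{01},k_{11})$ on $\{k\in\mathbb{N}_0^{\{0,1\}^2}:k_{++}=n\}$ is an upper $\beta$-confidence bound for the parameter $(\pi,\chi)\mapsto\chi^{(1)}_{1|1}$ in the restricted latent class model $\mathcal{P}_{2,\le}$.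
   Context: Convention: $x/0:=\infty$ for $x>0$. For a finite set $\mathcal{X}$, $\mathrm{prob}(\mathcal{X})$ is the set of probability densities on $\mathcal{X}$; $\mathrm{markov}(\mathcal{X},\mathcal{Y})$ the set of maps $(x,y)\mapsto p_{y|x}$ with $p_{\cdot|x}\in\mathrm{prob}(\mathcal{Y})$ for all $x$. $\mathrm{M}_{n,p}$ denotes the multinomial distribution with sample size $n$ and probability vector $p$. A subscript $+$ denotes summation over the replaced index. Let $\Theta_2:=\mathrm{prob}(\{0,1\})\times\mathrm{markov}(\{0,1\},\{0,1\}^2)$, $\theta=(\pi,\chi)$, $\mu(\theta)_j=\sum_{i=0}^1\pi_i\chi_{j|i}$ for $j\in\{0,1\}^2$, $P_\theta:=\mathrm{M}_{n,\mu(\theta)}$ on $\{k\in\mathbb{N}_0^{\{0,1\}^2}:k_{++}=n\}$. Put $\chi^{(1)}_{\iota|i}:=\chi_{\iota0|i}+\chi_{\iota1|i}$ and $\chi^{(2)}_{\iota|i}:=\chi_{0\iota|i}+\chi_{1\iota|i}$. The restricted latent class model is $\mathcal{P}_{2,\le}:=(P_\theta:\theta\in\Theta_{2,\le})$ with $\Theta_{2,\le}:=\{(\pi,\chi)\in\Theta_2:\chi^{(1)}_{0|0}\le\chi^{(2)}_{0|0}\}$. For a model $(P_\theta:\theta\in\Theta)$ and parameter $\kappa:\Theta\to\overline{\mathbb{R}}$, a measurable $\overline{\kappa}$ is an upper $\beta$-confidence bound if $P_\theta(\overline{\kappa}\ge\kappa(\theta))\ge\beta$ for all $\theta\in\Theta$.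 *)

(* Defs.v *)
From mathcomp Require Import all_boot all_order all_algebra.
From mathcomp Require Import reals constructive_ereal.
Set Implicit Arguments. Unset Strict Implicit. Unset Printing Implicit Defensive.
Import Order.TTheory GRing.Theory Num.Theory.
Local Open Scope ring_scope.

Definition is_prob (R : realType) (X : finType) (p : X -> R) : Prop :=
  (forall x, 0 <= p x) /\ \sum_(x : X) p x = 1.

(* chi : X -> Y -> R, chi x y = chi_{y|x}, is a Markov kernel. *)
Definition is_markov (R : realType) (X Y : finType) (chi : X -> Y -> R) : Prop :=
  forall x, is_prob (chi x).

(* Every such k has k i <= n, so k is represented
   as a finite function into 'I_n.+1; only those with total n get mass. *)
Definition multinom (R : realType) (I : finType) (n : nat) (p : I -> R)
    (A : pred {ffun I -> 'I_n.+1}) : R :=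
  \sum_(k : {ffun I -> 'I_n.+1} | ((\sum_(i : I) (k i : nat))%N == n) && A k)
     ((n`!)%:R / (\prod_(i : I) (k i)`!)%:R * \prod_(i : I) p i ^+ (k i : nat)).

(* Division with the convention x/0 := +oo (used only for x > 0). *)
Definition cdiv (R : realType) (x y : R) : \bar R :=
  if y == 0 then +oo%E else (x / y)%:E.

(* Trinomial parameter p |-> min{(1-p_2)/(1-p_1), 1}, with p_1,p_2,p_3
   represented by p ord0, p (inord 1), p (inord 2) for p : 'I_3 -> R. *)
Definition tri_param (R : realType) (p : 'I_3 -> R) : \bar R :=
  Order.min (cdiv (1 - p (inord 1)) (1 - p ord0)) 1%E.

(* Latent class model with two binary observed variables:
   latent index i : bool (false = 0, true = 1),
   observed j : bool * bool  ((a,b) = j_1 j_2). *)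
Definition lc_mu (R : realType) (pi : bool -> R) (chi : bool -> bool * bool -> R)
    (j : bool * bool) : R := \sum_(i : bool) pi i * chi i j.

Definition chi1 (R : realType) (chi : bool -> bool * bool -> R) (iota i : bool) : R :=
  chi i (iota, false) + chi i (iota, true).
Definition chi2 (R : realType) (chi : bool -> bool * bool -> R) (iota i : bool) : R :=
  chi i (false, iota) + chi i (true, iota).

Definition Theta2le (R : realType) (pi : bool -> R) (chi : bool -> bool * bool -> R) : Prop :=
  is_prob pi /\ is_markov chi /\ chi1 chi false false <= chi2 chi false false.
Arguments multinom {R I} n p A.

(* Main.v *)
Require Import Defs.
From mathcomp Require Import all_boot all_order all_algebra.
From mathcomp Require Import reals constructive_ereal.
From mathcomp Require Import ring lra zify.
Import Order.TTheory GRing.Theory Num.Theory.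
Local Open Scope ring_scope.

Lemma big3 (T : Type) (idx : T) (op : T -> T -> T) (f : 'I_3 -> T) :
  \big[op/idx]_(i < 3) f i = op (f ord0) (op (f (inord 1)) (op (f (inord 2)) idx)).
Proof.
rewrite !big_ord_recl big_ord0.
by congr (op _ (op (f _) (op (f _) _))); apply: val_inj; rewrite /= inordK.
Qed.

Lemma big4 (T : Type) (idx : T) (op : Monoid.com_law idx) (f : bool * bool -> T) :
  \big[op/idx]_(j : bool * bool) f j =
  op (op (f (true,true)) (f (true,false))) (op (f (false,true)) (f (false,false))).
Proof.
transitivity (\big[op/idx]_(p : bool * bool | predT p.1 && predT p.2) f (p.1, p.2)).
  by apply: eq_bigr => -[].
by rewrite -(pair_big predT predT (fun a b => f (a, b))) !big_bool.
Qed.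

Lemma sum_inj_le (R : numDomainType) (I J : finType) (h : J -> I) (Q : pred J)
  (P : pred I) (F : I -> R) :
  (forall j, Q j -> P (h j)) -> {in Q &, injective h} ->
  (forall i, P i -> 0 <= F i) ->
  \sum_(j | Q j) F (h j) <= \sum_(i | P i) F i.
Proof.
move=> QP hinj F0.
have -> : \sum_(j | Q j) F (h j) = \sum_(j in Q) F (h j) by apply: eq_bigl.
rewrite -big_imset // (bigID (fun i => i \in h @: Q) P) /=.
have -> : \sum_(i in h @: Q) F i = \sum_(i | P i && (i \in h @: Q)) F i.
  apply: eq_bigl => i; apply/idP/idP; last by case/andP.
  by move=> hi; rewrite hi andbT; case/imsetP: hi => j Qj ->; apply: QP.
by rewrite lerDl; apply: sumr_ge0 => i /andP[Pi _]; apply: F0.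
Qed.

Definition phi (n m : nat) (k3 : {ffun 'I_3 -> 'I_m.+1}) : {ffun bool * bool -> 'I_n.+1} :=
  [ffun j => inord (match j with
                    | (false, false) => (n - m)%N
                    | (true, false) => k3 ord0
                    | (false, true) => k3 (inord 1)
                    | (true, true) => k3 (inord 2) end)].

Arguments phi n {m}.

Lemma phiE (n m : nat) (k3 : {ffun 'I_3 -> 'I_m.+1}) : (m <= n)%N ->
  [/\ (phi n k3 (false,false) : nat) = (n - m)%N,
      (phi n k3 (true,false) : nat) = k3 ord0,
      (phi n k3 (false,true) : nat) = k3 (inord 1) &
      (phi n k3 (true,true) : nat) = k3 (inord 2)].
Proof.
move=> mn; have lt i : (k3 i < n.+1)%N by apply: leq_trans (ltn_ord _) _.
by rewrite !ffunE !inordK // ltnS leq_subr.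
Qed.

Lemma phi_inj (n m : nat) : (m <= n)%N -> injective (@phi n m).
Proof.
move=> mn k k' e; apply/ffunP => i.
have [_ a b c] := phiE n m k mn; have [_ a' b' c'] := phiE n m k' mn.
apply: val_inj; case: i => -[|[|[|i]]] Hi //.
- have -> : Ordinal Hi = ord0 by apply: val_inj.
  by move: (a); rewrite e a' /= => ->.
- have -> : Ordinal Hi = inord 1 by apply: val_inj; rewrite /= inordK.
  by move: (b); rewrite e b' /= => ->.
- have -> : Ordinal Hi = inord 2 by apply: val_inj; rewrite /= inordK.
  by move: (c); rewrite e c' /= => ->.
Qed.

Lemma term_id (R : realType) (n m : nat) (mu : bool * bool -> R) (s : R) (q : 'I_3 -> R)
  (k3 : {ffun 'I_3 -> 'I_m.+1}) :
  (m <= n)%N -> (\sum_(i < 3) (k3 i : nat))%N = m ->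
  mu (true,false) = s * q ord0 -> mu (false,true) = s * q (inord 1) ->
  mu (true,true) = s * q (inord 2) ->
  (n`!)%:R / (\prod_(j : bool * bool) (phi n k3 j)`!)%:R * \prod_(j : bool * bool) mu j ^+ phi n k3 j
  = (mu (false,false) ^+ (n - m) * s ^+ m *+ 'C(n, m)) *
    ((m`!)%:R / (\prod_(i < 3) (k3 i)`!)%:R * \prod_(i < 3) q i ^+ k3 i).
Proof.
move=> mn hs h1 h2 h3.
have [e0 e1 e2 e3] := phiE n m k3 mn.
rewrite !big4 /= e0 e1 e2 e3 !big3 /=.
rewrite big3 /= addn0 in hs.
have hsm : s ^+ m = s ^+ k3 ord0 * (s ^+ k3 (inord 1) * s ^+ k3 (inord 2)).
  by rewrite -!exprD hs.
have hn : n`! = ('C(n, m) * (m`! * (n - m)`!))%N by rewrite bin_fact.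
rewrite hsm hn h1 h2 h3 !natrM !exprMn mulr_natr.
have f0 k : (k`!)%:R != 0 :> R by rewrite pnatr_eq0 -lt0n fact_gt0.
field.
by rewrite !f0.
Qed.

Theorem theorem2 (R : realType) (beta : R) (n : nat)
  (u : nat -> nat -> nat -> \bar R) :
  0 <= beta <= 1 ->
  (forall k1 k2 k3 : nat, (k1 + k2 + k3 <= n)%N -> (0 <= u k1 k2 k3)%E) ->
  (forall m : nat, (m <= n)%N ->
     forall p : 'I_3 -> R, is_prob p ->
       beta <= multinom m p
                 (fun k => (tri_param p <= u (k ord0) (k (inord 1)) (k (inord 2)))%E)) ->
  forall (pi : bool -> R) (chi : bool -> bool * bool -> R),
    Theta2le pi chi ->
    beta <= multinom n (lc_mu pi chi)
              (fun k => ((chi1 chi true true)%:E <=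
                         u (k (true, false)) (k (false, true)) (k (true, true)))%E).
Proof.
move=> /andP[b0 b1] _ Hu pi chi [[pi0 pi1] [chim Hle]].
set mu := lc_mu pi chi.
have mu0 j : 0 <= mu j.
  by apply: sumr_ge0 => i _; apply: mulr_ge0 => //; apply: (chim i).1.
set s := mu (true,false) + mu (false,true) + mu (true,true).
have s0 : 0 <= s by rewrite /s; have := mu0 (true,false); have := mu0 (false,true); have := mu0 (true,true); lra.
have Hsum : mu (false,false) + s = 1.
  have : \sum_j mu j = 1.
    rewrite /mu /lc_mu exchange_big /=.
    under eq_bigr do rewrite -mulr_sumr (chim _).2 mulr1.
    exact: pi1.
  rewrite big4 /= /s; lra.
pose qn (j : nat) := if s == 0 then (if j == 2%N then 1 else 0)
  else (if j == 0%N then mu (true,false) else if j == 1%N then mu (false,true)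
        else mu (true,true)) / s.
pose q (i : 'I_3) := qn (nat_of_ord i).
have q0 : q ord0 = qn 0%N by [].
have q1 : q (inord 1) = qn 1%N by rewrite /q inordK.
have q2 : q (inord 2) = qn 2%N by rewrite /q inordK.
have Hq : [/\ mu (true,false) = s * qn 0%N, mu (false,true) = s * qn 1%N &
              mu (true,true) = s * qn 2%N].
  rewrite /qn; case: eqP => [s_eq|/eqP s_neq].
    rewrite s_eq !mul0r; move: s_eq; rewrite /s.
    have := mu0 (true,false); have := mu0 (false,true); have := mu0 (true,true).
    move=> h1 h2 h3 h4; split; lra.
  by rewrite /= !(mulrC s) !divfK.
have qprob : is_prob q.
  split.
    move=> i; rewrite /q /qn; case: (s == 0); first by case: (_ == _).
    by apply: divr_ge0 => //; case: ifP => _; [|case: ifP].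
  rewrite big3 q0 q1 q2 /qn; case: eqP => [_|/eqP sn] /=.
    by rewrite !add0r addr0.
  by rewrite addr0 -!mulrDl addrA divff.
set c := chi1 chi true true.
have Hc : (c%:E <= tri_param q)%E.
  have ch0 b j : 0 <= chi b j by apply: (chim b).1.
  have chs b : chi b (true,true) + chi b (true,false) + (chi b (false,true) + chi b (false,false)) = 1.
    by have := (chim b).2; rewrite big4.
  have c1 : c <= 1.
    rewrite /c /chi1; have := chs true; have := ch0 true (false,true);
    have := ch0 true (false,false); lra.
  rewrite /tri_param q0 q1 /qn; case: eqP => [s_eq| /eqP sn] /=.
    by rewrite !subr0 /cdiv oner_eq0 divr1 le_min andbb lee_fin.
  rewrite /cdiv; case: eqP => [_|/eqP d0].
    by rewrite le_min leey /= lee_fin; exact: c1.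
  rewrite le_min (_ : (c%:E <= 1)%E) ?andbT ?lee_fin; last by rewrite ?lee_fin; exact: c1.
  have spos : 0 < s by rewrite lt_def sn.
  have hx : s * (mu (true,false) / s) = mu (true,false) by rewrite mulrC divfK.
  have hy : s * (mu (false,true) / s) = mu (false,true) by rewrite mulrC divfK.
  have dpos : 0 < 1 - mu (true,false) / s.
    rewrite lt_def d0 subr_ge0 ler_pdivrMr // mul1r /s.
    have := mu0 (false,true); have := mu0 (true,true); lra.
  rewrite ler_pdivlMr // -(ler_pM2l spos).
  have -> : s * (c * (1 - mu (true, false) / s)) = c * (s - s * (mu (true,false) / s)) by ring.
  have -> : s * (1 - mu (false, true) / s) = s - s * (mu (false,true) / s) by ring.
  rewrite hx hy.
  have K : c * (mu (false,true) + mu (true,true)) <= mu (true,false) + mu (true,true).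
    rewrite /mu /lc_mu !big_bool /= /c /chi1.
    move: Hle; rewrite /chi1 /chi2 => Hle.
    have := chs true.
    have f1 : 0 <= (chi true (true,false) + chi true (true,true)) * pi true * (1 - (chi true (false,true) + chi true (true,true))).
      apply: mulr_ge0; first by apply: mulr_ge0 => //; apply: addr_ge0.
      by have := chs true; have := ch0 true (true,false); have := ch0 true (false,false); lra.
    have f2 : 0 <= (1 - (chi true (true,false) + chi true (true,true))) * (pi false * (chi false (false,true) + chi false (true,true))).
      apply: mulr_ge0; first by move: c1; rewrite /c /chi1; lra.
      by apply: mulr_ge0 => //; apply: addr_ge0.
    have f3 : 0 <= pi false * (chi false (true,false) - chi false (false,true)).
      by apply: mulr_ge0 => //; lra.
    move=> _; nra.
  rewrite /s; lra.
rewrite /multinom.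
rewrite (partition_big (fun k : {ffun bool * bool -> 'I_n.+1} => (inord (n - k (false,false)) : 'I_n.+1)) predT) //=.
have Hb : beta = \sum_(m < n.+1) beta * (mu (false,false) ^+ (n - m) * s ^+ m *+ 'C(n, m)).
  by rewrite -mulr_sumr -exprDn Hsum expr1n mulr1.
rewrite {1}Hb; apply: ler_sum => m _.
have mn : (m <= n)%N by rewrite -ltnS.
have HT := Hu m mn q qprob.
set cm := mu (false,false) ^+ (n - m) * s ^+ m *+ 'C(n, m).
have cm0 : 0 <= cm by apply/mulrn_wge0/mulr_ge0; apply: exprn_ge0.
apply: (le_trans (y := cm * multinom m q (fun k => (tri_param q <= u (k ord0) (k (inord 1)) (k (inord 2)))%E))).
  by rewrite mulrC ler_wpM2l.
apply: (le_trans _ (@sum_inj_le _ _ _ (@phi n m) (fun k3 => ((\sum_(i < 3) (k3 i : nat))%N == m) && (tri_param q <= u (k3 ord0) (k3 (inord 1)) (k3 (inord 2)))%E) _ _ _ _ _)).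
- rewrite /multinom mulr_sumr le_eqVlt; apply/orP; left; apply/eqP.
  apply: eq_bigr => k3 /andP[/eqP hs _].
  rewrite (@term_id _ n m mu s q k3 mn hs) //.
  + by have [h _ _] := Hq; rewrite q0 h.
  + by have [_ h _] := Hq; rewrite q1 h.
  + by have [_ _ h] := Hq; rewrite q2 h.
- move=> k3 /andP[/eqP hs E].
  have [e0 e1 e2 e3] := phiE n m k3 mn.
  apply/andP; split; first (apply/andP; split).
  + rewrite big4 /= e0 e1 e2 e3; rewrite big3 /= addn0 in hs.
    move: hs; set a := nat_of_ord (k3 ord0); set b := nat_of_ord (k3 (inord 1));
    set d := nat_of_ord (k3 (inord 2)) => hs.
    apply/eqP; lia.
  + rewrite e1 e2 e3; exact: le_trans Hc E.
  + apply/eqP/val_inj; rewrite /= e0 subKn // inordK //.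
- by move=> x y _ _; apply: phi_inj.
- move=> k _; apply: mulr_ge0.
    by apply: divr_ge0; apply: ler0n.
  by apply: prodr_ge0 => j _; apply: exprn_ge0.
Qed.
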